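(* Let $d = 10$. (i) If $n = (4(12m+9)+2) + 4(6k+3)\sqrt{10}$ with $m, k \in \mathbb{Z}$ and $m \equiv 1$ or $2 \pmod 5$, then there exist infinitely many $D(n)$-quadruples in $\mathbb{Z}[\sqrt{10}]$. (ii) If $n = (48m+2) + 24k\sqrt{10}$ with $m, k \in \mathbb{Z}$ and $m \equiv 3$ or $4 \pmod 5$, then there exist infinitely many $D(n)$-quadruples in $\mathbb{Z}[\sqrt{10}]$.
   Context: For $n \in \mathbb{Z}[\sqrt{d}]$, a set $\{a_1,a_2,a_3,a_4\}$ of four distinct non-zero elements of $\mathbb{Z}[\sqrt{d}]$ is called a $D(n)$-quadruple in $\mathbb{Z}[\sqrt{d}]$ if $a_ia_j + n$ is a square of an element of $\mathbb{Z}[\sqrt{d}]$ for all $1 \le i < j \le 4$. *)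

(* Defs.v *)
From Stdlib Require Import ZArith List.
Open Scope Z_scope.

(* Elements of Z[sqrt d] represented as pairs (x, y) meaning x + y*sqrt d. *)
Record Zsq := mkZsq { re : Z; im : Z }.

Definition zsq_add (a b : Zsq) : Zsq := mkZsq (re a + re b) (im a + im b).
Definition zsq_mul (d : Z) (a b : Zsq) : Zsq :=
  mkZsq (re a * re b + d * im a * im b) (re a * im b + im a * re b).
Definition zsq_zero : Zsq := mkZsq 0 0.

Definition is_square (d : Z) (z : Zsq) : Prop := exists w : Zsq, zsq_mul d w w = z.

Definition D_quadruple (d : Z) (n : Zsq) (a1 a2 a3 a4 : Zsq) : Prop :=
  let l := a1 :: a2 :: a3 :: a4 :: nil in
  NoDup l /\ (forall a, In a l -> a <> zsq_zero) /\
  is_square d (zsq_add (zsq_mul d a1 a2) n) /\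
  is_square d (zsq_add (zsq_mul d a1 a3) n) /\
  is_square d (zsq_add (zsq_mul d a1 a4) n) /\
  is_square d (zsq_add (zsq_mul d a2 a3) n) /\
  is_square d (zsq_add (zsq_mul d a2 a4) n) /\
  is_square d (zsq_add (zsq_mul d a3 a4) n).

Definition D_quadruple_set (d : Z) (n : Zsq) (S : list Zsq) : Prop :=
  exists a1 a2 a3 a4, S = a1 :: a2 :: a3 :: a4 :: nil /\ D_quadruple d n a1 a2 a3 a4.

Definition same_set (S T : list Zsq) : Prop := forall x, In x S <-> In x T.

(* There are infinitely many D(n)-quadruples (counted as sets): no finite list
   of sets contains (up to set equality) all of them. *)
Definition infinitely_many_D_quadruples (d : Z) (n : Zsq) : Prop :=
  forall L : list (list Zsq),
    exists S, D_quadruple_set d n S /\ forall T, In T L -> ~ same_set S T.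

(* Main.v *)
Require Import Defs.
From Stdlib Require Import ZArith List Lia Classical FinFun.
Open Scope Z_scope.

Definition qA (a1 a2 b1 b2 r1 r2 u v : Z) : Zsq :=
  mkZsq (a1 + 12*u*(a1+b1) - 240*v*r2) (a2 + 12*u*(a2+b2) - 24*v*r1).
Definition qB (a1 a2 b1 b2 r1 r2 u v : Z) : Zsq :=
  mkZsq (b1 + 12*u*(a1+b1) - 240*v*r2) (b2 + 12*u*(a2+b2) - 24*v*r1).
Definition qR (a1 a2 b1 b2 r1 r2 u v : Z) : Zsq :=
  mkZsq (r1 + 24*u*r1 - 120*v*(a2+b2)) (r2 + 24*u*r2 - 12*v*(a1+b1)).
Definition qC (a1 a2 b1 b2 r1 r2 u v : Z) : Zsq :=
  mkZsq (re (qA a1 a2 b1 b2 r1 r2 u v) + re (qB a1 a2 b1 b2 r1 r2 u v) + 2 * re (qR a1 a2 b1 b2 r1 r2 u v))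
        (im (qA a1 a2 b1 b2 r1 r2 u v) + im (qB a1 a2 b1 b2 r1 r2 u v) + 2 * im (qR a1 a2 b1 b2 r1 r2 u v)).
Definition qD (a1 a2 b1 b2 r1 r2 u v : Z) : Zsq :=
  mkZsq (re (qA a1 a2 b1 b2 r1 r2 u v) + re (qB a1 a2 b1 b2 r1 r2 u v) - 2 * re (qR a1 a2 b1 b2 r1 r2 u v))
        (im (qA a1 a2 b1 b2 r1 r2 u v) + im (qB a1 a2 b1 b2 r1 r2 u v) - 2 * im (qR a1 a2 b1 b2 r1 r2 u v)).


Section Gen.
Variables a1 a2 b1 b2 r1 r2 S1 S2 n1 n2 u v : Z.
Hypothesis Hn1 : n1 = r1*r1 + 10*r2*r2 - (a1*b1 + 10*a2*b2).
Hypothesis Hn2 : n2 = r1*r2 + r2*r1 - (a1*b2 + a2*b1).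
Hypothesis HS1 : S1*S1 + 10*S2*S2 = (a1+b1)*(a1+b1) + 10*(a2+b2)*(a2+b2) - 4*(r1*r1+10*r2*r2) + n1.
Hypothesis HS2 : S1*S2 + S2*S1 = 2*(a1+b1)*(a2+b2) - 8*r1*r2 + n2.
Hypothesis Hrel : u + 12*u*u - 120*v*v = 0.

Let A := qA a1 a2 b1 b2 r1 r2 u v.
Let B := qB a1 a2 b1 b2 r1 r2 u v.
Let C := qC a1 a2 b1 b2 r1 r2 u v.
Let D := qD a1 a2 b1 b2 r1 r2 u v.
Let R := qR a1 a2 b1 b2 r1 r2 u v.
Let n := mkZsq n1 n2.
Let K1 := 48*(r1*r1 + 10*r2*r2) - 12*((a1+b1)*(a1+b1) + 10*(a2+b2)*(a2+b2)).
Let K2 := 48*(2*r1*r2) - 12*(2*(a1+b1)*(a2+b2)).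
Ltac relsolve K Hrel :=
  apply Z.sub_move_0_r;
  transitivity (K * (u + 12*u*u - 120*v*v)); [unfold K1, K2; ring | rewrite Hrel; ring].

Lemma gen_squares :
  is_square 10 (zsq_add (zsq_mul 10 A B) n) /\
  is_square 10 (zsq_add (zsq_mul 10 A C) n) /\
  is_square 10 (zsq_add (zsq_mul 10 A D) n) /\
  is_square 10 (zsq_add (zsq_mul 10 B C) n) /\
  is_square 10 (zsq_add (zsq_mul 10 B D) n) /\
  is_square 10 (zsq_add (zsq_mul 10 C D) n).
Proof.
  unfold A, B, C, D, n, qC, qD, qA, qB, qR, is_square, zsq_add, zsq_mul; cbn [re im].
  repeat split.
  - exists (qR a1 a2 b1 b2 r1 r2 u v); unfold qR; cbn [re im]; f_equal; subst n1 n2;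
      [relsolve K1 Hrel | relsolve K2 Hrel].
  - exists (mkZsq (re A + re R) (im A + im R)); unfold A, R, qA, qR; cbn [re im]; f_equal; subst n1 n2;
      [relsolve K1 Hrel | relsolve K2 Hrel].
  - exists (mkZsq (re A - re R) (im A - im R)); unfold A, R, qA, qR; cbn [re im]; f_equal; subst n1 n2;
      [relsolve K1 Hrel | relsolve K2 Hrel].
  - exists (mkZsq (re B + re R) (im B + im R)); unfold B, R, qB, qR; cbn [re im]; f_equal; subst n1 n2;
      [relsolve K1 Hrel | relsolve K2 Hrel].
  - exists (mkZsq (re B - re R) (im B - im R)); unfold B, R, qB, qR; cbn [re im]; f_equal; subst n1 n2;
      [relsolve K1 Hrel | relsolve K2 Hrel].
  - exists (mkZsq S1 S2); cbn [re im]; f_equal; [rewrite HS1 | rewrite HS2]; subst n1 n2;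
      [relsolve (4*K1) Hrel | relsolve (4*K2) Hrel].
Qed.
End Gen.

Fixpoint uvs (j : nat) : Z * Z :=
  match j with
  | O => (0, 0)
  | S j' => let (u, v) := uvs j' in
            (43320 + 1039681*u + 3287760*v, 13699 + 328776*u + 1039681*v)
  end.

Lemma uvs_prop (j : nat) :
  let (u, v) := uvs j in u + 12*u*u - 120*v*v = 0 /\ 0 <= u /\ 0 <= v.
Proof.
  induction j as [|j IH]; cbn [uvs].
  - lia.
  - destruct (uvs j) as [u v]. cbv beta iota. destruct IH as [H1 [H2 H3]]. split; [|lia].
    transitivity (u + 12*u*u - 120*v*v); [ring | exact H1].
Qed.

Lemma uvs_step (j : nat) : fst (uvs j) < fst (uvs (S j)).
Proof.
  pose proof (uvs_prop j) as H. cbn [uvs]. destruct (uvs j) as [u v]. cbv beta iota in *. cbn [fst snd]. lia.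
Qed.

Lemma uvs_mono (i j : nat) : (i < j)%nat -> fst (uvs i) < fst (uvs j).
Proof.
  intro H. induction H.
  - apply uvs_step.
  - pose proof (uvs_step m). lia.
Qed.

Lemma uvs_inj (i j : nat) : fst (uvs i) = fst (uvs j) -> i = j.
Proof.
  intro H. destruct (Nat.lt_trichotomy i j) as [Hl|[He|Hl]]; auto.
  - pose proof (uvs_mono _ _ Hl). lia.
  - pose proof (uvs_mono _ _ Hl). lia.
Qed.

Lemma inj_not_in {X : Type} (f : nat -> X) (F : list X) :
  (forall i j, f i = f j -> i = j) -> exists j, ~ In (f j) F.
Proof.
  intro Hinj. apply NNPP. intro H.
  assert (Hall : forall j, In (f j) F).
  { intro j. apply NNPP. intro Hn. apply H. exists j. exact Hn. }
  assert (Hnd : NoDup (map f (seq 0 (S (length F))))).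
  { apply Injective_map_NoDup; [intros x y; apply Hinj | apply seq_NoDup]. }
  assert (Hinc : incl (map f (seq 0 (S (length F)))) F).
  { intros x Hx. apply in_map_iff in Hx. destruct Hx as [j [<- _]]. apply Hall. }
  pose proof (NoDup_incl_length Hnd Hinc) as Hlen.
  rewrite length_map, length_seq in Hlen. lia.
Qed.

Lemma qD_inj a1 a2 b1 b2 r1 r2 u v u' v' :
  (a1+b1-2*r1)*(a1+b1-2*r1) - 10*(a2+b2-2*r2)*(a2+b2-2*r2) <> 0 ->
  qD a1 a2 b1 b2 r1 r2 u v = qD a1 a2 b1 b2 r1 r2 u' v' -> u = u'.
Proof.
  intros HN H. pose proof (f_equal re H) as H1. pose proof (f_equal im H) as H2.
  unfold qD, qA, qB, qR in H1, H2. cbn [re im] in H1, H2.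
  set (X := a1+b1-2*r1). set (Y := a2+b2-2*r2).
  assert (E1 : X*(u-u') + 10*Y*(v-v') = 0).
  { match type of H1 with ?l = ?r =>
      assert (Ht : 24*(X*(u-u') + 10*Y*(v-v')) = l - r) by (unfold X, Y; ring) end. lia. }
  assert (E2 : Y*(u-u') + X*(v-v') = 0).
  { match type of H2 with ?l = ?r =>
      assert (Ht : 24*(Y*(u-u') + X*(v-v')) = l - r) by (unfold X, Y; ring) end. lia. }
  assert (E : (X*X - 10*Y*Y)*(u-u') = X*(X*(u-u') + 10*Y*(v-v')) - 10*Y*(Y*(u-u') + X*(v-v'))) by ring.
  rewrite E1, E2 in E. rewrite !Z.mul_0_r, Z.sub_0_r in E. apply Z.mul_eq_0 in E. destruct E as [E|E]; [contradiction|lia].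
Qed.

Lemma nodup4 (x y z w : Zsq) :
  x <> y -> x <> z -> x <> w -> y <> z -> y <> w -> z <> w ->
  NoDup (x :: y :: z :: w :: nil).
Proof.
  intros. repeat constructor; simpl; intuition.
Qed.

Lemma main_gen a1 a2 b1 b2 r1 r2 S1 S2 n1 n2 :
  n1 = r1*r1 + 10*r2*r2 - (a1*b1 + 10*a2*b2) ->
  n2 = r1*r2 + r2*r1 - (a1*b2 + a2*b1) ->
  S1*S1 + 10*S2*S2 = (a1+b1)*(a1+b1) + 10*(a2+b2)*(a2+b2) - 4*(r1*r1+10*r2*r2) + n1 ->
  S1*S2 + S2*S1 = 2*(a1+b1)*(a2+b2) - 8*r1*r2 + n2 ->
  (forall u v, qA a1 a2 b1 b2 r1 r2 u v <> zsq_zero) ->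
  (forall u v, qB a1 a2 b1 b2 r1 r2 u v <> zsq_zero) ->
  (forall u v, qC a1 a2 b1 b2 r1 r2 u v <> zsq_zero) ->
  (forall u v, qD a1 a2 b1 b2 r1 r2 u v <> zsq_zero) ->
  (forall u v, qA a1 a2 b1 b2 r1 r2 u v <> qB a1 a2 b1 b2 r1 r2 u v) ->
  (forall u v, qA a1 a2 b1 b2 r1 r2 u v <> qC a1 a2 b1 b2 r1 r2 u v) ->
  (forall u v, qA a1 a2 b1 b2 r1 r2 u v <> qD a1 a2 b1 b2 r1 r2 u v) ->
  (forall u v, qB a1 a2 b1 b2 r1 r2 u v <> qC a1 a2 b1 b2 r1 r2 u v) ->
  (forall u v, qB a1 a2 b1 b2 r1 r2 u v <> qD a1 a2 b1 b2 r1 r2 u v) ->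
  (forall u v, qC a1 a2 b1 b2 r1 r2 u v <> qD a1 a2 b1 b2 r1 r2 u v) ->
  (a1+b1-2*r1)*(a1+b1-2*r1) - 10*(a2+b2-2*r2)*(a2+b2-2*r2) <> 0 ->
  infinitely_many_D_quadruples 10 (mkZsq n1 n2).
Proof.
  intros Hn1 Hn2 HS1 HS2 zA zB zC zD dAB dAC dAD dBC dBD dCD HN L.
  set (f := fun j => qD a1 a2 b1 b2 r1 r2 (fst (uvs j)) (snd (uvs j))).
  destruct (inj_not_in f (concat L)) as [j Hj].
  { intros i j Hij. apply uvs_inj. unfold f in Hij. eapply qD_inj; eauto. }
  pose proof (uvs_prop j) as Hp. unfold f in Hj.
  destruct (uvs j) as [u v]. cbn [fst snd] in Hj. destruct Hp as [Hrel _].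
  exists (qA a1 a2 b1 b2 r1 r2 u v :: qB a1 a2 b1 b2 r1 r2 u v ::
          qC a1 a2 b1 b2 r1 r2 u v :: qD a1 a2 b1 b2 r1 r2 u v :: nil).
  split.
  - eexists _, _, _, _. split; [reflexivity|].
    unfold D_quadruple. split; [apply nodup4; auto|]. split.
    + intros x Hx. simpl in Hx. intuition (subst; eauto).
    + eapply gen_squares; eauto.
  - intros T HT Hsame. apply Hj. apply in_concat. exists T. split; [exact HT|].
    apply Hsame. simpl. auto.
Qed.

Ltac nodist :=
  let u := fresh "u" in let v := fresh "v" in let H := fresh "H" in
  intros u v H;
  let H1 := fresh "H1" in let H2 := fresh "H2" in
  pose proof (f_equal re H) as H1; pose proof (f_equal im H) as H2;
  unfold qC, qD, zsq_zero in H1, H2; unfold qA, qB, qR in H1, H2; cbn [re im] in H1, H2; clear H;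
  first [ clear H1; lia | clear H2; lia ].


Lemma class_i1 (s k : Z) : infinitely_many_D_quadruples 10 (mkZsq (4 * (12 * (5*s+1) + 9) + 2) (4 * (6 * k + 3))).
Proof.
  apply (main_gen (146 + 720*s + -228*k) (-45 + -228*s + 72*k) (88 + 480*s + -168*k) (-36 + -168*s + 48*k) (-118 + -600*s + 192*k) (39 + 192*s + -60*k) (54 + 240*s + -60*k) (-10 + -60*s + 24*k)).
  - ring.
  - ring.
  - ring.
  - ring.
  - nodist.
  - nodist.
  - nodist.
  - nodist.
  - nodist.
  - nodist.
  - nodist.
  - nodist.
  - nodist.
  - nodist.
  - lia.
Qed.


Lemma class_i2 (s k : Z) : infinitely_many_D_quadruples 10 (mkZsq (4 * (12 * (5*s+2) + 9) + 2) (4 * (6 * k + 3))).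
Proof.
  apply (main_gen (-132 + -360*s + 138*k) (59 + 138*s + -36*k) (-96 + -240*s + 78*k) (31 + 78*s + -24*k) (116 + 300*s + -102*k) (-42 + -102*s + 30*k) (-38 + -120*s + 60*k) (27 + 60*s + -12*k)).
  - ring.
  - ring.
  - ring.
  - ring.
  - nodist.
  - nodist.
  - nodist.
  - nodist.
  - nodist.
  - nodist.
  - nodist.
  - nodist.
  - nodist.
  - nodist.
  - lia.
Qed.


Lemma class_ii3 (s k : Z) : infinitely_many_D_quadruples 10 (mkZsq (48 * (5*s+3) + 2) (24 * k)).
Proof.
  apply (main_gen (182 + 300*s + -54*k) (-33 + -54*s + 30*k) (34 + 60*s + 6*k) (3 + 6*s + 6*k) (-72 + -120*s + 6*k) (4 + 6*s + -12*k) (144 + 240*s + -60*k) (-37 + -60*s + 24*k)).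
  - ring.
  - ring.
  - ring.
  - ring.
  - nodist.
  - nodist.
  - nodist.
  - nodist.
  - nodist.
  - nodist.
  - nodist.
  - nodist.
  - nodist.
  - nodist.
  - lia.
Qed.


Lemma class_ii4 (s k : Z) : infinitely_many_D_quadruples 10 (mkZsq (48 * (5*s+4) + 2) (24 * k)).
Proof.
  apply (main_gen (96 + 120*s + 36*k) (29 + 36*s + 12*k) (192 + 240*s + -24*k) (-20 + -24*s + 24*k) (-96 + -120*s + -24*k) (-19 + -24*s + -12*k) (-98 + -120*s + 60*k) (48 + 60*s + -12*k)).
  - ring.
  - ring.
  - ring.
  - ring.
  - nodist.
  - nodist.
  - nodist.
  - nodist.
  - nodist.
  - nodist.
  - nodist.
  - nodist.
  - nodist.
  - nodist.
  - lia.
Qed.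


Theorem mainTheorem7 :
  (forall m k : Z, (m mod 5 = 1 \/ m mod 5 = 2) ->
     infinitely_many_D_quadruples 10
       (mkZsq (4 * (12 * m + 9) + 2) (4 * (6 * k + 3)))) /\
  (forall m k : Z, (m mod 5 = 3 \/ m mod 5 = 4) ->
     infinitely_many_D_quadruples 10
       (mkZsq (48 * m + 2) (24 * k))).
Proof.
  split; intros m k Hm; pose proof (Z.div_mod m 5 ltac:(lia)) as Hd;
    set (s := m / 5) in Hd.
  - destruct Hm as [Hm|Hm]; rewrite Hm in Hd; rewrite Hd.
    + apply class_i1.
    + apply class_i2.
  - destruct Hm as [Hm|Hm]; rewrite Hm in Hd; rewrite Hd.
    + apply class_ii3.
    + apply class_ii4.
Qed.
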